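(* Let $g:\mathbb{R}^d\to\mathbb{R}$ be convex and twice differentiable, minimized at $x^*$ with $\|x^*\|\le R$, $g^*=g(x^* )$, and $\epsilon>0$. Let $\omega:\mathbb{R}_+\to\mathbb{R}_+$ be continuously differentiable with $0<\omega'(s)\le\gamma\,\omega(s)/s$ for some $\gamma\ge1$ and all $s>0$. Let $\alpha\in[0,1)$, $\mu=\frac{8}{\sqrt{1-\alpha}}$, $c\ge1$ with $64(\alpha+\frac1c)\gamma^2\le1$, and suppose $\delta\le\min\{\frac{\epsilon}{9\mu Rc((1+\alpha)c+1)},\ 8\mu R\,\omega(8\mu R)\}$. Then for any $x^{(1)},x^{(2)}\in\mathbb{R}^d$ with $\|x^{(1)}-x^*\|,\|x^{(2)}-x^*\|\le\mu R$ and any $A$ with $\frac{1}{2\omega(2\mu R)}\le A\le\frac{R^2}{\epsilon}$, there is an algorithm that, after at most $6+\log_2\big[\big(\frac{160\mu Rc}{\delta}+\frac{9R^2}{\epsilon}\big)\omega(8c\mu R)\big]$ calls to an $(\alpha,\delta)$-approximate $\omega$-proximal step oracle for $g$, returns $y\in\mathbb{R}^d$ and $\lambda>0$ such that, writing $a=\frac{\lambda+\sqrt{\lambda^2+4\lambda A}}{2}$ and $\tilde x=\frac{a}{A+a}x^{(1)}+\frac{A}{A+a}x^{(2)}$, either (i) $g(y)\le g^*+\epsilon$ and $\omega(\|y-\tilde x\|)\|y-\tilde x\|\le c\delta$; or (ii) $\frac12\le\lambda\,\omega(\|y-\tilde x\|)\le1$, $\omega(\|y-\tilde x\|)\|y-\tilde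 x\|>c\delta$, and $\|\nabla g(y)+\omega(\|y-\tilde x\|)(y-\tilde x)\|\le\alpha\,\omega(\|y-\tilde x\|)\|y-\tilde x\|+\delta$.
   Context: Let $\omega:\mathbb{R}_+\to\mathbb{R}_+$ be non-decreasing, $\delta\ge0$, $\alpha\in[0,1)$. An $(\alpha,\delta)$-approximate $\omega$-proximal step oracle for $g$ is a procedure that, queried at any $x\in\mathbb{R}^d$, returns some $y$ with $\|\nabla g(y)+\omega(\|y-x\|)(y-x)\|\le\alpha\,\omega(\|y-x\|)\|y-x\|+\delta$ (the returned $y$ may be any such point, possibly different on repeated queries). *)

(* Defs.v *)
From Stdlib Require Import Reals.
From mathcomp Require Import ssreflect ssrbool eqtype ssrnat fintype bigop.
Set Implicit Arguments.
Unset Strict Implicit.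
Local Open Scope R_scope.

Definition vec (d : nat) := 'I_d -> R.

Definition vadd d (u v : vec d) : vec d := fun i => u i + v i.
Definition vsub d (u v : vec d) : vec d := fun i => u i - v i.
Definition vscale d (a : R) (u : vec d) : vec d := fun i => a * u i.
Definition dot d (u v : vec d) : R := \big[Rplus/0]_(i < d) (u i * v i).
Definition vnorm d (u : vec d) : R := sqrt (dot u u).

Definition has_gradient d (f : vec d -> R) (x G : vec d) : Prop :=
  forall e, 0 < e -> exists del, 0 < del /\
    forall h : vec d, vnorm h < del ->
      Rabs (f (vadd x h) - f x - dot G h) <= e * vnorm h.

Definition twice_diff_with_grad d (g : vec d -> R) (grad : vec d -> vec d) : Prop :=
  (forall x, has_gradient g x (grad x)) /\
  (forall (i : 'I_d) x, exists H : vec d, has_gradient (fun z => grad z i) x H).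

Definition convex_fun d (g : vec d -> R) : Prop :=
  forall (x y : vec d) (t : R), 0 <= t <= 1 ->
    g (vadd (vscale t x) (vscale (1 - t) y)) <= t * g x + (1 - t) * g y.

Definition prox_oracle_ok d (grad : vec d -> vec d) (om : R -> R)
    (alpha delta : R) (x y : vec d) : Prop :=
  let r := vnorm (vsub y x) in
  vnorm (vadd (grad y) (vscale (om r) (vsub y x))) <= alpha * om r * r + delta.

(* Deterministic oracle algorithms: decision trees that either return an
   output (y, lambda) or query the oracle at a point x and continue with a
   function of the answer. Such an algorithm may depend only on what is
   passed to it, not on g. *)
Inductive oalg (d : nat) : Type :=
| ORet : vec d -> R -> oalg d
| OQuery : vec d -> (vec d -> oalg d) -> oalg d.

(* [safe ok post n a]: against every oracle whose answers satisfy [ok]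
   (answers may be chosen adversarially and adaptively), algorithm [a]
   makes at most [n] oracle calls and returns an output satisfying [post]. *)
Fixpoint safe d (ok : vec d -> vec d -> Prop) (post : vec d -> R -> Prop)
    (n : nat) (a : oalg d) {struct a} : Prop :=
  match a with
  | ORet y lam => post y lam
  | OQuery x k =>
      match n with
      | O => False
      | S m => forall y, ok x y -> safe ok post m (k y)
      end
  end.

Definition log2 (x : R) : R := ln x / ln 2.

(* Main.v *)
Require Import Defs.
From Stdlib Require Import Reals Lra Psatz ZArith FunctionalExtensionality.
From HB Require Import structures.
From mathcomp Require Import ssreflect ssrbool eqtype ssrnat fintype bigop.
Lemma Rplus_0_l' (x : R) : Rplus 0 x = x. Proof. exact: Rplus_0_l. Qed.
Lemma Rplus_assoc' : ssrfun.associative Rplus. Proof. move=> x y z; by rewrite Rplus_assoc. Qed.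
HB.instance Definition _ := Monoid.isComLaw.Build R 0%R Rplus Rplus_assoc' Rplus_comm Rplus_0_l'.
Local Open Scope R_scope.
Set Implicit Arguments.
Unset Strict Implicit.

Lemma sumR_recr d (F : 'I_d.+1 -> R) : \big[Rplus/0]_(i < d.+1) F i
  = \big[Rplus/0]_(i < d) F (widen_ord (leqnSn d) i) + F ord_max.
Proof. exact: big_ord_recr. Qed.
Lemma sumR_0 (F : 'I_0 -> R) : \big[Rplus/0]_(i < 0) F i = 0.
Proof. exact: big_ord0. Qed.

Lemma sumR_add d (F G : 'I_d -> R) :
  \big[Rplus/0]_(i < d) (F i + G i) = \big[Rplus/0]_(i < d) F i + \big[Rplus/0]_(i < d) G i.
Proof.
elim: d F G => [|d IH] F G; first by rewrite !sumR_0; ring.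
rewrite !sumR_recr IH; ring.
Qed.

Lemma sumR_scale d (a : R) (F : 'I_d -> R) :
  \big[Rplus/0]_(i < d) (a * F i) = a * \big[Rplus/0]_(i < d) F i.
Proof.
elim: d F => [|d IH] F; first by rewrite !sumR_0; ring.
rewrite !sumR_recr IH; ring.
Qed.

Lemma sumR_nonneg d (F : 'I_d -> R) :
  (forall i, 0 <= F i) -> 0 <= \big[Rplus/0]_(i < d) F i.
Proof.
elim: d F => [|d IH] F H; first by rewrite sumR_0; lra.
rewrite sumR_recr. have := IH (fun i => F (widen_ord (leqnSn d) i)) (fun i => H _).
have := H ord_max. lra.
Qed.

Lemma sumR_ext d (F G : 'I_d -> R) : (forall i, F i = G i) ->
  \big[Rplus/0]_(i < d) F i = \big[Rplus/0]_(i < d) G i.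
Proof. move=> H; apply: eq_bigr => i _; exact: H. Qed.

Lemma dot_sym d (u v : vec d) : dot u v = dot v u.
Proof. rewrite /dot; apply: sumR_ext => i; ring. Qed.

Lemma dot_addl d (u v w : vec d) : dot (vadd u v) w = dot u w + dot v w.
Proof. rewrite /dot -sumR_add; apply: sumR_ext => i; rewrite /vadd; ring. Qed.

Lemma dot_subl d (u v w : vec d) : dot (vsub u v) w = dot u w - dot v w.
Proof.
rewrite /dot. have -> : \big[Rplus/0]_(i < d) (u i * w i) - \big[Rplus/0]_(i < d) (v i * w i)
  = \big[Rplus/0]_(i < d) (u i * w i) + (-1) * \big[Rplus/0]_(i < d) (v i * w i) by ring.
rewrite -sumR_scale -sumR_add; apply: sumR_ext => i; rewrite /vsub; ring.
Qed.

Lemma dot_scalel d a (u w : vec d) : dot (vscale a u) w = a * dot u w.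
Proof. rewrite /dot -sumR_scale; apply: sumR_ext => i; rewrite /vscale; ring. Qed.

Lemma dot_addr d (u v w : vec d) : dot w (vadd u v) = dot w u + dot w v.
Proof. by rewrite dot_sym dot_addl !(dot_sym w). Qed.
Lemma dot_subr d (u v w : vec d) : dot w (vsub u v) = dot w u - dot w v.
Proof. by rewrite dot_sym dot_subl !(dot_sym w). Qed.
Lemma dot_scaler d a (u w : vec d) : dot w (vscale a u) = a * dot w u.
Proof. by rewrite dot_sym dot_scalel (dot_sym w). Qed.

Lemma dot_self_nonneg d (u : vec d) : 0 <= dot u u.
Proof. apply: sumR_nonneg => i; nra. Qed.

Lemma vnorm_nonneg d (u : vec d) : 0 <= vnorm u.
Proof. exact: sqrt_pos. Qed.

Lemma vnorm_sq d (u : vec d) : vnorm u * vnorm u = dot u u.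
Proof. rewrite /vnorm sqrt_sqrt //; exact: dot_self_nonneg. Qed.

Lemma dot_ineq d (u v : vec d) (s : R) : 2 * s * dot u v <= s * s * dot u u + dot v v.
Proof.
have := dot_self_nonneg (vsub (vscale s u) v).
rewrite !dot_subl !dot_subr !dot_scalel !dot_scaler (dot_sym v u). nra.
Qed.

Lemma cauchy_schwarz d (u v : vec d) : dot u v <= vnorm u * vnorm v.
Proof.
have hu := vnorm_sq u; have hv := vnorm_sq v.
have nu := vnorm_nonneg u; have nv := vnorm_nonneg v.
case: (Req_dec (vnorm u) 0) => Hu.
-
  rewrite Hu Rmult_0_l. apply: Rnot_lt_le => Hpos.
  set s := (dot v v + 1) / (2 * dot u v).
  have := dot_ineq u v s. rewrite -hu Hu.
  have Hs : 2 * s * dot u v = dot v v + 1 by rewrite /s; field; lra.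
  rewrite Hs. nra.
- have Hp : 0 < vnorm u by lra.
  have := dot_ineq u v (vnorm v / vnorm u). rewrite -hu -hv.
  have -> : vnorm v / vnorm u * (vnorm v / vnorm u) * (vnorm u * vnorm u) = vnorm v * vnorm v
    by field; lra.
  move=> H.
  have H2 : vnorm v / vnorm u * (2 * dot u v - 2 * vnorm u * vnorm v) <= 0.
    have -> : vnorm v / vnorm u * (2 * dot u v - 2 * vnorm u * vnorm v)
      = 2 * (vnorm v / vnorm u) * dot u v - 2 * (vnorm v * vnorm v) by field; lra.
    lra.
  case: (Req_dec (vnorm v) 0) => Hv.
  + have := dot_ineq v u (1/2 * 0).
    move=> _.
    rewrite Hv Rmult_0_r. apply: Rnot_lt_le => Hpos.
    set s := (dot u u + 1) / (2 * dot u v).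
    have := dot_ineq v u s. rewrite (dot_sym v u) -hv Hv.
    have Hs : 2 * s * dot u v = dot u u + 1 by rewrite /s; field; lra.
    rewrite Hs. nra.
  + have : 0 < vnorm v / vnorm u by apply: Rdiv_lt_0_compat; lra.
    move=> Hq.
    have : 2 * dot u v - 2 * vnorm u * vnorm v <= 0.
      apply: Rnot_lt_le => Hc. have : 0 < vnorm v / vnorm u * (2 * dot u v - 2 * vnorm u * vnorm v) by nra.
      lra.
    lra.
Qed.

Lemma vnorm_triangle d (u v : vec d) : vnorm (vadd u v) <= vnorm u + vnorm v.
Proof.
have := cauchy_schwarz u v.
have h := vnorm_sq (vadd u v). rewrite !dot_addl !dot_addr (dot_sym v u) in h.
have hu := vnorm_sq u; have hv := vnorm_sq v.
have nu := vnorm_nonneg u; have nv := vnorm_nonneg v; have n := vnorm_nonneg (vadd u v).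
move=> cs. apply: Rsqr_incr_0_var; rewrite /Rsqr; nra.
Qed.

Lemma vnorm_scale d a (u : vec d) : vnorm (vscale a u) = Rabs a * vnorm u.
Proof.
rewrite /vnorm dot_scalel dot_scaler -Rmult_assoc sqrt_mult_alt; last by nra.
by rewrite -(sqrt_Rsqr_abs a) /Rsqr.
Qed.

Lemma vec_ext d (u v : vec d) : (forall i, u i = v i) -> u = v.
Proof. move=> H; exact: functional_extensionality. Qed.

Lemma vnorm_sub_sym d (u v : vec d) : vnorm (vsub u v) = vnorm (vsub v u).
Proof.
have -> : vsub u v = vscale (-1) (vsub v u) by apply: vec_ext => i; rewrite /vsub /vscale; ring.
rewrite vnorm_scale Rabs_Ropp Rabs_R1; ring.
Qed.

Lemma abs_lower x b : Rabs x <= b -> - b <= x.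
Proof. move=> H; move: H; split_Rabs; lra. Qed.
Lemma abs_upper x b : Rabs x <= b -> x <= b.
Proof. move=> H; move: H; split_Rabs; lra. Qed.

Lemma le_eps (a b N : R) : 0 <= N -> (forall e, 0 < e -> a - e * N <= b) -> a <= b.
Proof.
move=> HN H. apply: Rnot_lt_le => Hlt.
have He : 0 < (a - b) / (2 * (N + 1)) by apply: Rdiv_lt_0_compat; lra.
have := H _ He.
have : (a - b) / (2 * (N + 1)) * N <= (a - b) / 2.
  apply: (Rmult_le_reg_r (2 * (N + 1))); first lra.
  have -> : (a - b) / (2 * (N + 1)) * N * (2 * (N + 1)) = (a - b) * N by field; lra.
  have -> : (a - b) / 2 * (2 * (N + 1)) = (a - b) * (N + 1) by field.
  nra.
lra.
Qed.

Lemma first_order d (g : vec d -> R) (G y z : vec d) :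
  convex_fun g -> has_gradient g y G -> g y + dot G (vsub z y) <= g z.
Proof.
move=> Hc Hg.
set u := vsub z y.
have HN := vnorm_nonneg u.
suff : dot G u <= g z - g y by lra.
apply: (le_eps HN) => e He.
have [del [Hdel Hd]] := Hg e He.
set t := Rmin 1 (del / (2 * (vnorm u + 1))).
have Ht0 : 0 < t.
  rewrite /t; apply: Rmin_pos; first lra. apply: Rdiv_lt_0_compat; lra.
have Ht1 : t <= 1 by apply: Rmin_l.
have Ht2 : t <= del / (2 * (vnorm u + 1)) by apply: Rmin_r.
set h := vscale t u.
have Hh : vnorm h = t * vnorm u by rewrite /h vnorm_scale Rabs_right; lra.
have Hhd : vnorm h < del.
  rewrite Hh.
  have : t * (2 * (vnorm u + 1)) <= del.
    have := Rmult_le_compat_r (2 * (vnorm u + 1)) _ _ ltac:(lra) Ht2.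
    have -> : del / (2 * (vnorm u + 1)) * (2 * (vnorm u + 1)) = del by field; lra.
    done.
  nra.
have H1 := Hd h Hhd.
have Heq : vadd (vscale t z) (vscale (1 - t) y) = vadd y h.
  apply: vec_ext => i; rewrite /h /u /vadd /vscale /vsub; ring.
have H2 := Hc z y t (conj (Rlt_le _ _ Ht0) Ht1).
rewrite Heq in H2.
have H3 : dot G h = t * dot G u by rewrite /h dot_scaler.
rewrite H3 Hh in H1.
have : t * (dot G u - e * vnorm u) <= t * (g z - g y).
  have := abs_lower H1. nra.
move=> H5. apply: (Rmult_le_reg_l t); lra.
Qed.

Lemma grad_mono d (g : vec d -> R) (G1 G2 y1 y2 : vec d) :
  convex_fun g -> has_gradient g y1 G1 -> has_gradient g y2 G2 ->
  0 <= dot (vsub G1 G2) (vsub y1 y2).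
Proof.
move=> Hc H1 H2.
have A1 := first_order y2 Hc H1.
have A2 := first_order y1 Hc H2.
rewrite dot_subl.
have E1 : dot G1 (vsub y2 y1) = - dot G1 (vsub y1 y2).
  have -> : vsub y2 y1 = vscale (-1) (vsub y1 y2) by apply: vec_ext => i; rewrite /vsub /vscale; ring.
  rewrite dot_scaler; ring.
lra.
Qed.

Lemma om_pos (om om' : R -> R) s :
  (forall s, 0 <= s -> 0 <= om s) ->
  (forall s, 0 < s -> derivable_pt_lim om s (om' s)) ->
  (forall s, 0 < s -> 0 < om' s) -> 0 < s -> 0 < om s.
Proof.
move=> Hn Hd Hp Hs.
have [x [Hx1 Hx2]] := MVT_cor2 om om' (s/2) s ltac:(lra) (fun c Hc => Hd c ltac:(lra)).
have := Hn (s/2) ltac:(lra). have := Hp x ltac:(lra). nra.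
Qed.

Lemma om_growth (om om' : R -> R) gam r1 r2 :
  (forall s, 0 <= s -> 0 <= om s) ->
  (forall s t, 0 <= s -> s <= t -> om s <= om t) ->
  (forall s, 0 < s -> derivable_pt_lim om s (om' s)) ->
  (forall s, 0 < s -> om' s <= gam * om s / s) ->
  0 < gam -> 0 < r1 -> r1 < r2 ->
  om r2 - om r1 <= gam * om r2 * (r2 - r1) / r1.
Proof.
move=> Hn Hm Hd Hb Hg H1 H12.
have [x [Hx1 Hx2]] := MVT_cor2 om om' r1 r2 H12 (fun c Hc => Hd c ltac:(lra)).
rewrite Hx1.
have Hb' := Hb x ltac:(lra).
have Hox : om x <= om r2 by apply: Hm; lra.
have Hom0 : 0 <= om x by apply: Hn; lra.
have Q : om x / x <= om r2 / r1.
  apply: (Rmult_le_reg_r (x * r1)); first nra.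
  have -> : om x / x * (x * r1) = om x * r1 by field; lra.
  have -> : om r2 / r1 * (x * r1) = om r2 * x by field; lra.
  nra.
have : om' x <= gam * (om r2 / r1).
  apply: (Rle_trans _ _ _ Hb'). rewrite /Rdiv Rmult_assoc. apply: Rmult_le_compat_l; lra.
have -> : gam * om r2 * (r2 - r1) / r1 = gam * (om r2 / r1) * (r2 - r1) by field; lra.
move=> H. apply: Rmult_le_compat_r; lra.
Qed.

Definition lamf (A w : R) : R := A * w ^ 2 / (1 - w).
Definition aof (A lam : R) : R := (lam + sqrt (lam ^ 2 + 4 * lam * A)) / 2.
Definition xq d (x1 x2 : vec d) (A lam : R) : vec d :=
  vadd (vscale (aof A lam / (A + aof A lam)) x1) (vscale (A / (A + aof A lam)) x2).
Definition xw d (x1 x2 : vec d) (w : R) : vec d := vadd (vscale w x1) (vscale (1 - w) x2).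

Lemma lamf_pos A w : 0 < A -> 0 < w < 1 -> 0 < lamf A w.
Proof. move=> HA Hw; rewrite /lamf; apply: Rdiv_lt_0_compat; [apply: Rmult_lt_0_compat; [lra| apply: pow_lt; lra] | lra]. Qed.

Lemma aof_lamf A w : 0 < A -> 0 < w < 1 -> aof A (lamf A w) = A * w / (1 - w).
Proof.
move=> HA Hw. rewrite /aof.
have -> : lamf A w ^ 2 + 4 * lamf A w * A = Rsqr (A * w * (2 - w) / (1 - w)).
  rewrite /lamf /Rsqr; field; lra.
rewrite sqrt_Rsqr; last first.
  apply: Rmult_le_pos; last by apply: Rlt_le; apply: Rinv_0_lt_compat; lra.
  apply: Rmult_le_pos; nra.
rewrite /lamf; field; lra.
Qed.

Lemma xq_lamf d (x1 x2 : vec d) A w : 0 < A -> 0 < w < 1 ->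
  xq x1 x2 A (lamf A w) = xw x1 x2 w.
Proof.
move=> HA Hw. rewrite /xq aof_lamf //.
have -> : A * w / (1 - w) / (A + A * w / (1 - w)) = w by field; split; nra.
have -> : A / (A + A * w / (1 - w)) = 1 - w by field; split; nra.
done.
Qed.

Lemma xw_dist d (x1 x2 xs : vec d) w D : 0 <= w <= 1 ->
  vnorm (vsub x1 xs) <= D -> vnorm (vsub x2 xs) <= D -> vnorm (vsub (xw x1 x2 w) xs) <= D.
Proof.
move=> Hw H1 H2.
have -> : vsub (xw x1 x2 w) xs = vadd (vscale w (vsub x1 xs)) (vscale (1 - w) (vsub x2 xs)).
  apply: vec_ext => i; rewrite /xw /vsub /vadd /vscale; ring.
apply: Rle_trans (vnorm_triangle _ _) _.
rewrite !vnorm_scale !Rabs_right; nra.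
Qed.

Lemma xw_diff d (x1 x2 : vec d) w1 w2 :
  vnorm (vsub (xw x1 x2 w1) (xw x1 x2 w2)) = Rabs (w1 - w2) * vnorm (vsub x1 x2).
Proof.
have -> : vsub (xw x1 x2 w1) (xw x1 x2 w2) = vscale (w1 - w2) (vsub x1 x2).
  apply: vec_ext => i; rewrite /xw /vsub /vadd /vscale; ring.
by rewrite vnorm_scale.
Qed.

Lemma cs_lower d (u v : vec d) : - (vnorm u * vnorm v) <= dot u v.
Proof.
have := cauchy_schwarz (vscale (-1) u) v.
rewrite dot_scalel vnorm_scale Rabs_Ropp Rabs_R1. lra.
Qed.

Lemma vnorm_sub_le d (u v : vec d) : vnorm (vsub u v) <= vnorm u + vnorm v.
Proof.
have -> : vsub u v = vadd u (vscale (-1) v) by apply: vec_ext => i; rewrite /vsub /vadd /vscale; ring.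
apply: Rle_trans (vnorm_triangle _ _) _. rewrite vnorm_scale Rabs_Ropp Rabs_R1; lra.
Qed.

Lemma ans_bound d (g : vec d -> R) grad (om : R -> R) alpha c delta (xs x y : vec d) D :
  (forall s, 0 <= s -> 0 <= om s) ->
  convex_fun g -> (forall z, has_gradient g z (grad z)) -> (forall z, g xs <= g z) ->
  vnorm (vsub x xs) <= D -> 0 < c -> 0 < delta -> 0 <= alpha -> alpha + 1 / c <= 1 / 3 ->
  prox_oracle_ok grad om alpha delta x y ->
  c * delta < om (vnorm (vsub y x)) * vnorm (vsub y x) ->
  vnorm (vadd (grad y) (vscale (om (vnorm (vsub y x))) (vsub y x)))
     < (alpha + 1 / c) * om (vnorm (vsub y x)) * vnorm (vsub y x)
  /\ vnorm (vsub y x) < 2 * D.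
Proof.
move=> Homnn Hc Hg Hmin HD Hc0 Hd0 Ha0 Hac Hok Hbig.
rewrite /prox_oracle_ok in Hok.
set u := vsub y x in Hok Hbig *.
set r := vnorm u in Hok Hbig *.
set rho := om r in Hok Hbig *.
set v := vadd (grad y) (vscale rho u) in Hok *.
have Hdl : delta < rho * r / c.
  apply: (Rmult_lt_reg_l c) => //. have -> : c * (rho * r / c) = rho * r by field; lra. done.
have Hv : vnorm v < (alpha + 1 / c) * rho * r.
  have -> : (alpha + 1 / c) * rho * r = alpha * rho * r + rho * r / c by field; lra.
  lra.
split => //.
have Hr0 : 0 <= r := vnorm_nonneg u.
have Hrr : 0 < rho * r by nra.
have F := first_order xs Hc (Hg y).
have Hm := Hmin y.
have HG : grad y = vsub v (vscale rho u).
  apply: vec_ext => i; rewrite /v /vsub /vadd /vscale; ring.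
have Hys : vsub y xs = vadd u (vsub x xs).
  apply: vec_ext => i; rewrite /u /vsub /vadd; ring.
have Hxs : vsub xs y = vscale (-1) (vsub y xs).
  apply: vec_ext => i; rewrite /vsub /vscale; ring.
rewrite Hxs dot_scaler HG dot_subl dot_scalel Hys (dot_addr u (vsub x xs) v) (dot_addr u (vsub x xs) u) in F.
have cs1 := cauchy_schwarz v u.
have cs2 := cauchy_schwarz v (vsub x xs).
have cs3 := cs_lower u (vsub x xs).
have uu := vnorm_sq u. rewrite -/r in uu.
have Dn := vnorm_nonneg (vsub x xs).
have Vn := vnorm_nonneg v.
have rhonn : 0 <= rho by apply: Homnn.
set D' := vnorm (vsub x xs) in cs2 cs3 Dn.
have E1 : rho * (- (r * D')) <= rho * dot u (vsub x xs) by apply: Rmult_le_compat_l.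
have E2 : dot v u + dot v (vsub x xs) - rho * (dot u u + dot u (vsub x xs)) >= 0.
  lra.
have K : rho * (r * r - r * D') <= vnorm v * (r + D').
  rewrite -uu in E2. change (vnorm u) with r in cs1. lra.
have E3 : r * D' <= r * D by apply: Rmult_le_compat_l.
have E4 : rho * (r * D') <= rho * (r * D) by apply: Rmult_le_compat_l.
have E5 : vnorm v * D' <= vnorm v * D by apply: Rmult_le_compat_l.
have K1 : rho * r * (r - D) <= vnorm v * (r + D) by nra.
have HDn : 0 <= D := Rle_trans _ _ _ Dn HD.
have Hr : 0 < r.
  case: (Rle_lt_or_eq_dec 0 r Hr0) => // H0. rewrite -H0 in Hrr. lra.
have K2 : vnorm v * (r + D) < (alpha + 1 / c) * rho * r * (r + D).
  apply: Rmult_lt_compat_r; lra.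
have K3 : rho * r * (r - D) < rho * r * ((alpha + 1/c) * (r + D)) by lra.
have K4 : r - D < (alpha + 1/c) * (r + D).
  apply: (Rmult_lt_reg_l (rho * r)) => //.
have Hac0 : 0 <= alpha + 1 / c.
  have : 0 < 1 / c by apply: Rdiv_lt_0_compat; lra.
  lra.
have K5 : (alpha + 1 / c) * (r + D) <= 1/3 * (r + D) by apply: Rmult_le_compat_r; lra.
lra.
Qed.

Lemma key_ineq d (g : vec d -> R) grad (y1 y2 p1 p2 : vec d) rho1 rho2 :
  convex_fun g -> (forall z, has_gradient g z (grad z)) -> 0 <= rho1 -> 0 <= rho2 ->
  (rho1 * vnorm (vsub y1 p1) - rho2 * vnorm (vsub y2 p2)) * (vnorm (vsub y1 p1) - vnorm (vsub y2 p2))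
  <= (rho1 * vnorm (vsub y1 p1) + rho2 * vnorm (vsub y2 p2)) * vnorm (vsub p1 p2)
     + (vnorm (vadd (grad y1) (vscale rho1 (vsub y1 p1))) + vnorm (vadd (grad y2) (vscale rho2 (vsub y2 p2))))
       * (vnorm (vsub y1 p1) + vnorm (vsub y2 p2) + vnorm (vsub p1 p2)).
Proof.
move=> Hc Hg H1 H2.
set u1 := vsub y1 p1. set u2 := vsub y2 p2. set e := vsub p1 p2.
set v1 := vadd (grad y1) (vscale rho1 u1). set v2 := vadd (grad y2) (vscale rho2 u2).
have M := grad_mono Hc (Hg y1) (Hg y2).
set Z := vsub v1 v2. set W := vsub (vscale rho1 u1) (vscale rho2 u2).
have EG : vsub (grad y1) (grad y2) = vsub Z W.
  apply: vec_ext => i; rewrite /Z /W /v1 /v2 /vsub /vadd /vscale; ring.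
have EY : vsub y1 y2 = vadd (vsub u1 u2) e.
  apply: vec_ext => i; rewrite /u1 /u2 /e /vsub /vadd; ring.
rewrite EG EY dot_subl (dot_addr (vsub u1 u2) e W) in M.
have EW : dot W (vsub u1 u2) = rho1 * dot u1 u1 - rho1 * dot u1 u2 - rho2 * dot u1 u2 + rho2 * dot u2 u2.
  rewrite /W dot_subl !dot_scalel (dot_subr u1 u2 u1) (dot_subr u1 u2 u2) (dot_sym u2 u1); ring.
rewrite EW in M.
have r1n := vnorm_nonneg u1. have r2n := vnorm_nonneg u2. have En := vnorm_nonneg e.
have V1n := vnorm_nonneg v1. have V2n := vnorm_nonneg v2.
have Zb : vnorm Z <= vnorm v1 + vnorm v2 by apply: vnorm_sub_le.
have Yb : vnorm (vadd (vsub u1 u2) e) <= vnorm u1 + vnorm u2 + vnorm e.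
  apply: Rle_trans (vnorm_triangle _ _) _. have := vnorm_sub_le u1 u2. lra.
have Wb : vnorm W <= rho1 * vnorm u1 + rho2 * vnorm u2.
  apply: Rle_trans (vnorm_sub_le _ _) _. rewrite !vnorm_scale !Rabs_right; lra.
have Zn := vnorm_nonneg Z. have Yn := vnorm_nonneg (vadd (vsub u1 u2) e).
have D1 : dot Z (vadd (vsub u1 u2) e) <= (vnorm v1 + vnorm v2) * (vnorm u1 + vnorm u2 + vnorm e).
  apply: Rle_trans (cauchy_schwarz _ _) _. apply: Rmult_le_compat => //.
have D2 : - ((rho1 * vnorm u1 + rho2 * vnorm u2) * vnorm e) <= dot W e.
  apply: Rle_trans (cs_lower W e). apply: Ropp_le_contravar. apply: Rmult_le_compat_r => //.
have D3 : dot u1 u2 <= vnorm u1 * vnorm u2 := cauchy_schwarz u1 u2.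
have s1 := vnorm_sq u1. have s2 := vnorm_sq u2.
have D4 : (rho1 + rho2) * dot u1 u2 <= (rho1 + rho2) * (vnorm u1 * vnorm u2).
  apply: Rmult_le_compat_l; lra.
have EQ : (rho1 * vnorm u1 - rho2 * vnorm u2) * (vnorm u1 - vnorm u2)
   = rho1 * (vnorm u1 * vnorm u1) - (rho1 + rho2) * (vnorm u1 * vnorm u2) + rho2 * (vnorm u2 * vnorm u2) by ring.
rewrite EQ s1 s2.
have EQ2 : rho1 * dot u1 u1 - rho1 * dot u1 u2 - rho2 * dot u1 u2 + rho2 * dot u2 u2
  = rho1 * dot u1 u1 - (rho1 + rho2) * dot u1 u2 + rho2 * dot u2 u2 by ring.
rewrite EQ2 in M.
lra.
Qed.

Unset Implicit Arguments.
Set Strict Implicit.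

Lemma arith_contra rho1 rho2 r1 r2 V1 V2 E a gam :
  0 < rho1 -> 8 * rho1 < 5 * rho2 -> 0 < r1 -> r1 < r2 -> 1 <= gam ->
  rho2 - rho1 <= gam * rho2 * (r2 - r1) / r1 ->
  (rho1 * r1 - rho2 * r2) * (r1 - r2) <= (rho1 * r1 + rho2 * r2) * E + (V1 + V2) * (r1 + r2 + E) ->
  V1 <= a * rho1 * r1 -> V2 <= a * rho2 * r2 -> 0 <= a -> 64 * (a * gam) <= 1 ->
  0 <= E -> 80 * (gam * E) <= r2 -> 0 <= V1 -> 0 <= V2 -> False.
Proof.
move=> Hr1 Hrr H1 H12 Hg Hgr Hk HV1 HV2 Ha Hag HE HgE HV1n HV2n.
set q := r2 - r1.
have Hq : 0 < q by rewrite /q; lra.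
have Hr2 : 0 < rho2 by lra.
set t := rho2 * r2. set s := rho1 * r1.
have Ht : 0 < t by rewrite /t; nra.
have Hs : 0 < s by rewrite /s; nra.
have h1 : 8 * s < 5 * t by rewrite /s /t; nra.
have h2 : 3 * r1 < 8 * (gam * q).
  have g1 : (rho2 - rho1) * r1 <= gam * rho2 * q.
    have -> : gam * rho2 * q = gam * rho2 * (r2 - r1) / r1 * r1 by rewrite /q; field; lra.
    apply: Rmult_le_compat_r; lra.
  have g2 : 3 * rho2 * r1 < 8 * (rho2 - rho1) * r1 by nra.
  have g3 : rho2 * (3 * r1) < rho2 * (8 * (gam * q)) by nra.
  apply: (Rmult_lt_reg_l rho2) => //.
have h3 : 3 * r2 < 11 * (gam * q).
  have : q <= gam * q by nra.
  rewrite /q in h2 *. lra.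
have h4 : (rho1 * r1 - rho2 * r2) * (r1 - r2) = (t - s) * q by rewrite /t /s /q; ring.
rewrite h4 in Hk. change (rho1 * r1 + rho2 * r2) with (s + t) in Hk.
have h5 : 3 * t * q <= 8 * ((t - s) * q) by nra.
have h6 : (V1 + V2) * (r1 + r2 + E) <= a * (s + t) * (2 * r2 + E).
  have : V1 + V2 <= a * (s + t) by rewrite /s /t; nra.
  move=> HV. apply: Rmult_le_compat; lra.
have h7 : (t - s) * q <= (s + t) * E + a * (s + t) * (2 * r2 + E) by lra.
have h8 : 3 * q <= 13 * (E + a * (2 * r2 + E)).
  have h9 : (s + t) * (E + a * (2 * r2 + E)) <= (13 / 8 * t) * (E + a * (2 * r2 + E)).
    apply: Rmult_le_compat_r; nra.
  have h10 : t * (3 * q) <= t * (13 * (E + a * (2 * r2 + E))) by nra.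
  apply: (Rmult_le_reg_l t) => //.
have h11 : 3 * (gam * q) <= 13 * (gam * E + (a * gam) * (2 * r2 + E)).
  have : gam * (3 * q) <= gam * (13 * (E + a * (2 * r2 + E))) by apply: Rmult_le_compat_l; lra.
  move=> H. have -> : 3 * (gam * q) = gam * (3 * q) by ring.
  have -> : 13 * (gam * E + a * gam * (2 * r2 + E)) = gam * (13 * (E + a * (2 * r2 + E))) by ring.
  done.
have h12 : (a * gam) * (2 * r2 + E) <= 1 / 64 * (2 * r2 + E) by apply: Rmult_le_compat_r; lra.
have h13 : E <= gam * E by nra.
lra.
Qed.

Lemma lam_ratio A w1 w2 wlo th del :
  0 < A -> 0 < wlo -> wlo <= w1 -> w1 < w2 -> w2 <= 1 - th -> 0 < th ->
  w2 - w1 <= del -> 10 * del <= wlo -> 33 * del <= th ->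
  lamf A w2 <= 5 / 4 * lamf A w1.
Proof.
move=> HA Hlo H1 H12 H2 Hth Hd Hd1 Hd2.
rewrite /lamf.
have a1 : w2 <= 11 / 10 * w1 by lra.
have a2 : w2 * w2 <= 121 / 100 * (w1 * w1) by nra.
have a3 : 33 * (1 - w1) <= 34 * (1 - w2) by lra.
have a4 : w2 * w2 * (33 * (1 - w1)) <= 121 / 100 * (w1 * w1) * (34 * (1 - w2)).
  apply: Rmult_le_compat; nra.
have b : w2 ^ 2 * (1 - w1) <= 5 / 4 * (w1 ^ 2 * (1 - w2)) by simpl; nra.
apply: (Rmult_le_reg_r ((1 - w1) * (1 - w2))); first nra.
have -> : A * w2 ^ 2 / (1 - w2) * ((1 - w1) * (1 - w2)) = A * (w2 ^ 2 * (1 - w1)) by field; lra.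
have -> : 5 / 4 * (A * w1 ^ 2 / (1 - w1)) * ((1 - w1) * (1 - w2)) = A * (5 / 4 * (w1 ^ 2 * (1 - w2))) by field; lra.
apply: Rmult_le_compat_l; lra.
Qed.

Lemma count_N X : 0 < X -> exists N : nat, X <= 2 ^ N /\ (INR N <= log2 X + 1 \/ N = 0%nat).
Proof.
move=> HX.
have Hl2 : 0 < ln 2 by rewrite -ln_1; apply: ln_increasing; lra.
case: (Rle_lt_dec X 1) => HX1.
  exists 0%nat; split; [simpl; lra | by right].
set z := log2 X.
have Hz : 0 < z.
  rewrite /z /log2. apply: Rdiv_lt_0_compat => //. rewrite -ln_1; apply: ln_increasing; lra.
have [Hu1 Hu2] := archimed z.
have Hup : (0 <= up z)%Z. apply: le_IZR. lra.
exists (Z.to_nat (up z)).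
have HN : INR (Z.to_nat (up z)) = IZR (up z) by rewrite INR_IZR_INZ Z2Nat.id.
split; last by left; rewrite HN; lra.
rewrite -Rpower_pow; last lra.
rewrite /Rpower HN.
have -> : X = exp (z * ln 2) by rewrite /z /log2; field_simplify (ln X / ln 2 * ln 2); [rewrite exp_ln // | lra].
have : z * ln 2 <= IZR (up z) * ln 2 by apply: Rmult_le_compat_r; lra.
case/Rle_lt_or_eq_dec => H; first by apply: Rlt_le; apply: exp_increasing.
by rewrite H; lra.
Qed.

Lemma log2_le x y : 0 < x -> x <= y -> log2 x <= log2 y.
Proof.
move=> Hx Hxy. have Hl2 : 0 < ln 2 by rewrite -ln_1; apply: ln_increasing; lra.
rewrite /log2. apply: Rmult_le_compat_r; first by apply: Rlt_le; apply: Rinv_0_lt_compat.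
case: (Rle_lt_or_eq_dec _ _ Hxy) => H; last by rewrite H; lra.
apply: Rlt_le; exact: ln_increasing.
Qed.

Lemma count_final X Y N : 0 < X -> X <= 8 * Y -> 1 <= Y ->
  (INR N <= log2 X + 1 \/ N = 0%nat) -> INR (S (S N)) <= 6 + log2 Y.
Proof.
move=> HX HXY HY HN.
have Hl2 : 0 < ln 2 by rewrite -ln_1; apply: ln_increasing; lra.
have HlY : 0 <= log2 Y.
  rewrite /log2. apply: Rmult_le_pos; last by apply: Rlt_le; apply: Rinv_0_lt_compat.
  case: (Rle_lt_or_eq_dec _ _ HY) => H; last by rewrite -H ln_1; lra.
  rewrite -ln_1; apply: Rlt_le; apply: ln_increasing; lra.
have H8 : log2 (8 * Y) = 3 + log2 Y.
  rewrite /log2 ln_mult; try lra.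
  have -> : 8 = 2 * (2 * 2) by lra.
  rewrite !ln_mult; try lra. field; lra.
have := log2_le X (8 * Y) HX HXY. rewrite H8 => HL.
rewrite !S_INR.
case: HN => [HN|->]; first lra.
simpl; lra.
Qed.

Set Implicit Arguments.
Unset Strict Implicit.

Definition junk d : oalg d := ORet (fun _ => 0) 1.

Definition classify d (x1 x2 : vec d) (A : R) (om : R -> R) (c delta w : R) (y : vec d)
  (kl kh : oalg d) : oalg d :=
  let lam := lamf A w in
  let r := vnorm (vsub y (xq x1 x2 A lam)) in
  match Rle_dec (om r * r) (c * delta) with
  | left _ => ORet y lam
  | right _ => match Rle_dec (1/2) (lam * om r) with
     | left _ => match Rle_dec (lam * om r) 1 with left _ => ORet y lam | right _ => kh end
     | right _ => kl end
  end.

Fixpoint bisect d (x1 x2 : vec d) (A : R) (om : R -> R) (c delta : R) (N : nat) (lo hi : R) : oalg d :=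
  match N with
  | O => junk d
  | S N' => let m := (lo + hi) / 2 in
     OQuery (xq x1 x2 A (lamf A m))
       (fun y => classify x1 x2 A om c delta m y (bisect x1 x2 A om c delta N' m hi)
                                               (bisect x1 x2 A om c delta N' lo m))
  end.

Lemma classify_safe d (ok : vec d -> vec d -> Prop) post n x1 x2 A om c delta w y kl kh :
  (om (vnorm (vsub y (xq x1 x2 A (lamf A w)))) * vnorm (vsub y (xq x1 x2 A (lamf A w))) <= c * delta
     -> post y (lamf A w)) ->
  (~ om (vnorm (vsub y (xq x1 x2 A (lamf A w)))) * vnorm (vsub y (xq x1 x2 A (lamf A w))) <= c * delta ->
     1/2 <= lamf A w * om (vnorm (vsub y (xq x1 x2 A (lamf A w)))) <= 1 -> post y (lamf A w)) ->
  (~ om (vnorm (vsub y (xq x1 x2 A (lamf A w)))) * vnorm (vsub y (xq x1 x2 A (lamf A w))) <= c * delta ->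
     lamf A w * om (vnorm (vsub y (xq x1 x2 A (lamf A w)))) < 1/2 -> safe ok post n kl) ->
  (~ om (vnorm (vsub y (xq x1 x2 A (lamf A w)))) * vnorm (vsub y (xq x1 x2 A (lamf A w))) <= c * delta ->
     1 < lamf A w * om (vnorm (vsub y (xq x1 x2 A (lamf A w)))) -> safe ok post n kh) ->
  safe ok post n (classify x1 x2 A om c delta w y kl kh).
Proof.
move=> H1 H2 H3 H4. rewrite /classify.
case: Rle_dec => Ha; first by apply: H1.
case: Rle_dec => Hb.
  case: Rle_dec => Hc; first by apply: H2.
  apply: H4 => //; lra.
apply: H3 => //; lra.
Qed.

Definition postP d (g : vec d -> R) (grad : vec d -> vec d) (om : R -> R) (alpha c delta eps : R)
  (xs x y : vec d) (lam : R) : Prop :=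
  let r := vnorm (vsub y x) in
  (g y <= g xs + eps /\ om r * r <= c * delta) \/
  (1 / 2 <= lam * om r <= 1 /\ om r * r > c * delta /\
   vnorm (vadd (grad y) (vscale (om r) (vsub y x))) <= alpha * om r * r + delta).

Unset Implicit Arguments.
Set Strict Implicit.
Theorem mainTheorem16
  (d : nat) (Rad eps : R) (om om' : R -> R) (gam alpha c delta : R)
  (hR : 0 < Rad) (heps : 0 < eps)
  (* omega : R_+ -> R_+, non-decreasing, continuous on [0,oo),
     continuously differentiable on (0,oo) with 0 < om' s <= gam om s / s *)
  (hom_nonneg : forall s, 0 <= s -> 0 <= om s)
  (hom_mono : forall s t, 0 <= s -> s <= t -> om s <= om t)
  (hom_cont : forall s, 0 <= s -> forall e, 0 < e -> exists del, 0 < del /\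
      forall t, 0 <= t -> Rabs (t - s) < del -> Rabs (om t - om s) < e)
  (hom_deriv : forall s, 0 < s -> derivable_pt_lim om s (om' s))
  (hom'_cont : forall s, 0 < s -> continuity_pt om' s)
  (hgam : 1 <= gam)
  (hom'_bd : forall s, 0 < s -> 0 < om' s /\ om' s <= gam * om s / s)
  (halpha : 0 <= alpha < 1)
  (hc : 1 <= c)
  (hcgam : 64 * (alpha + 1 / c) * gam ^ 2 <= 1)
  (hdelta0 : 0 < delta)
  (hdelta : delta <= Rmin
      (eps / (9 * (8 / sqrt (1 - alpha)) * Rad * c * ((1 + alpha) * c + 1)))
      (8 * (8 / sqrt (1 - alpha)) * Rad * om (8 * (8 / sqrt (1 - alpha)) * Rad)))
  (x1 x2 : vec d) (A : R)
  (hA : 1 / (2 * om (2 * (8 / sqrt (1 - alpha)) * Rad)) <= A <= Rad ^ 2 / eps) :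
  let mu := 8 / sqrt (1 - alpha) in
  exists (alg : oalg d) (n : nat),
    INR n <= 6 + log2 ((160 * mu * Rad * c / delta + 9 * Rad ^ 2 / eps)
                       * om (8 * c * mu * Rad)) /\
    forall (g : vec d -> R) (grad : vec d -> vec d) (xstar : vec d),
      convex_fun g ->
      twice_diff_with_grad g grad ->
      (forall x, g xstar <= g x) ->
      vnorm xstar <= Rad ->
      vnorm (vsub x1 xstar) <= mu * Rad ->
      vnorm (vsub x2 xstar) <= mu * Rad ->
      safe (prox_oracle_ok grad om alpha delta)
        (fun y lam =>
           0 < lam /\
           let a := (lam + sqrt (lam ^ 2 + 4 * lam * A)) / 2 in
           let xt := vadd (vscale (a / (A + a)) x1) (vscale (A / (A + a)) x2) in
           let r := vnorm (vsub y xt) in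
           (g y <= g xstar + eps /\ om r * r <= c * delta) \/
           (1 / 2 <= lam * om r <= 1 /\ om r * r > c * delta /\
            vnorm (vadd (grad y) (vscale (om r) (vsub y xt)))
              <= alpha * om r * r + delta))
        n alg.
Proof.
move=> mu.
change (8 / sqrt (1 - alpha)) with mu in hdelta. change (8 / sqrt (1 - alpha)) with mu in hA.
have Hsq : 0 < sqrt (1 - alpha) by apply: sqrt_lt_R0; lra.
have Hmu : 0 < mu by rewrite /mu; apply: Rdiv_lt_0_compat; lra.
have Hmu1 : 1 <= mu.
  rewrite /mu. have : sqrt (1 - alpha) <= 1.
    apply: (Rle_trans _ (sqrt 1)); [apply: sqrt_le_1_alt; lra | rewrite sqrt_1; lra].
  move=> Hs1. apply: (Rmult_le_reg_r (sqrt (1 - alpha))) => //.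
  have -> : 8 / sqrt (1 - alpha) * sqrt (1 - alpha) = 8 by field; lra.
  lra.
have Hg2 : 1 <= gam ^ 2 by simpl; nra.
have Hc0 : 0 < c by lra.
have Hic : 0 < 1 / c by apply: Rdiv_lt_0_compat; lra.
set a' := alpha + 1 / c.
have Ha'0 : 0 <= a' by rewrite /a'; lra.
have Ha'g2 : 64 * a' * gam ^ 2 <= 1 by rewrite /a'.
have Ha' : a' <= 1 / 64.
  have : 64 * a' * 1 <= 64 * a' * gam ^ 2 by apply: Rmult_le_compat_l; lra.
  lra.
have Ha'g : 64 * (a' * gam) <= 1.
  have : gam <= gam ^ 2 by simpl; nra.
  move=> H. have : 64 * a' * gam <= 64 * a' * gam ^ 2 by apply: Rmult_le_compat_l; lra.
  lra.
have Hc64 : 64 * gam <= c.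
  have H64 : 64 * (1 / c) * gam ^ 2 <= 1.
    have : 64 * (1/c) * gam ^ 2 <= 64 * a' * gam ^ 2.
      apply: Rmult_le_compat_r; first by simpl; nra.
      rewrite /a'; lra.
    lra.
  have : 64 * gam ^ 2 <= c.
    have -> : 64 * gam ^ 2 = 64 * (1 / c) * gam ^ 2 * c by field; lra.
    have := Rmult_le_compat_r c _ _ (Rlt_le _ _ Hc0) H64. lra.
  have : gam <= gam ^ 2 by simpl; nra.
  lra.
have Hc64' : 64 <= c by lra.
have Hom'p : forall s, 0 < s -> 0 < om' s by move=> s Hs; case: (hom'_bd s Hs).
have Hom'b : forall s, 0 < s -> om' s <= gam * om s / s by move=> s Hs; case: (hom'_bd s Hs).
have Hompos : forall s, 0 < s -> 0 < om s.
  move=> s Hs. exact: (om_pos hom_nonneg hom_deriv Hom'p Hs).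
set M := om (2 * mu * Rad).
have HM : 0 < M by apply: Hompos; nra.
set O8 := om (8 * mu * Rad).
have HO8 : 0 < O8 by apply: Hompos; nra.
set Om := om (8 * c * mu * Rad).
have HmR : 0 < mu * Rad by nra.
have HOmM : M <= Om.
  apply: hom_mono; first nra.
  have : 2 * (mu * Rad) <= 8 * c * (mu * Rad) by nra.
  lra.
have HOm8 : O8 <= Om.
  apply: hom_mono; first nra.
  have : 8 * (mu * Rad) <= 8 * c * (mu * Rad) by nra.
  lra.
have Hd1 : delta <= eps / (9 * mu * Rad * c * ((1 + alpha) * c + 1)).
  exact: (Rle_trans _ _ _ hdelta (Rmin_l _ _)).
have Hd2 : delta <= 8 * mu * Rad * O8.
  exact: (Rle_trans _ _ _ hdelta (Rmin_r _ _)).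
case: hA => hA1 hA2. rewrite -/M in hA1.
have HAM : 1 <= 2 * A * M.
  have : 1 / (2 * M) * (2 * M) <= A * (2 * M) by apply: Rmult_le_compat_r; lra.
  have -> : 1 / (2 * M) * (2 * M) = 1 by field; lra.
  lra.
have HA : 0 < A by nra.
have HAR : A <= Rad ^ 2 / eps := hA2.
set wlo := 1 / (4 * A * M).
set Q := 8 * mu * Rad * M / (c * delta).
set P := mu * Rad * M / delta.
set th := 1 / (4 + Q).
set whi := 1 - th.
set X := 5 / 2 * P + 40 * (A * M) + 33 * (4 + Q).
set Del := 1 / X.
have HQ : 0 < Q by rewrite /Q; apply: Rdiv_lt_0_compat; nra.
have HQ2 : 0 < P by rewrite /P; apply: Rdiv_lt_0_compat; nra.
have HX : 0 < X by rewrite /X; nra.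
have Hwlo : 0 < wlo by rewrite /wlo; apply: Rdiv_lt_0_compat; nra.
have Hwlo2 : wlo <= 1 / 2.
  rewrite /wlo. apply: (Rmult_le_reg_r (4 * A * M)); first nra.
  have -> : 1 / (4 * A * M) * (4 * A * M) = 1 by field; lra.
  lra.
have Hth : 0 < th by rewrite /th; apply: Rdiv_lt_0_compat; lra.
have Hth2 : th <= 1 / 4.
  rewrite /th. apply: (Rmult_le_reg_r (4 + Q)); first lra.
  have -> : 1 / (4 + Q) * (4 + Q) = 1 by field; lra.
  lra.
have HDel : 0 < Del by rewrite /Del; apply: Rdiv_lt_0_compat; lra.
have HDel1 : 10 * Del <= wlo.
  rewrite /Del /wlo. apply: (Rmult_le_reg_r (X * (4 * A * M))); first nra.
  have -> : 10 * (1 / X) * (X * (4 * A * M)) = 40 * (A * M) by field; lra.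
  have -> : 1 / (4 * A * M) * (X * (4 * A * M)) = X by field; lra.
  rewrite /X; lra.
have HDel2 : 33 * Del <= th.
  rewrite /Del /th. apply: (Rmult_le_reg_r (X * (4 + Q))); first nra.
  have -> : 33 * (1 / X) * (X * (4 + Q)) = 33 * (4 + Q) by field; lra.
  have -> : 1 / (4 + Q) * (X * (4 + Q)) = X by field; lra.
  rewrite /X; lra.
have HDel3 : 5 * (Del * (mu * Rad * M)) <= 2 * delta.
  rewrite /Del. 
  have -> : 5 * (1 / X * (mu * Rad * M)) = 5 * P / X * delta by rewrite /P; field; lra.
  have : 5 * P / X <= 2.
    apply: (Rmult_le_reg_r X) => //.
    have -> : 5 * P / X * X = 5 * P by field; lra.
    rewrite /X; lra.
  move=> H. have := Rmult_le_compat_r delta _ _ (Rlt_le _ _ hdelta0) H. lra.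
have [N [HN1 HN2]] := count_N X HX.
exists (OQuery (xq x1 x2 A (lamf A wlo)) (fun y => classify x1 x2 A om c delta wlo y
   (OQuery (xq x1 x2 A (lamf A whi)) (fun y' => classify x1 x2 A om c delta whi y' (junk d)
        (bisect x1 x2 A om c delta N wlo whi)))
   (junk d))), (S (S N)).
split.
  apply: (count_final X) => //.
  - set T := mu * Rad * c * Om / delta.
    have HmRO : delta <= 8 * (mu * Rad * Om).
      have : 8 * mu * Rad * O8 <= 8 * mu * Rad * Om by apply: Rmult_le_compat_l; nra.
      lra.
    have HT8 : 8 <= T.
      rewrite /T. apply: (Rmult_le_reg_r delta) => //.
      have -> : mu * Rad * c * Om / delta * delta = c * (mu * Rad * Om) by field; lra.
      have : 64 * (mu * Rad * Om) <= c * (mu * Rad * Om) by apply: Rmult_le_compat_r; nra.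
      lra.
    have HPT : P <= T.
      rewrite /P /T /Rdiv. apply: Rmult_le_compat_r; first by apply: Rlt_le; apply: Rinv_0_lt_compat.
      have : M <= c * Om by nra.
      move=> H. have := Rmult_le_compat_l (mu * Rad) _ _ (Rlt_le _ _ HmR) H. lra.
    have HQP : Q = 8 * P / c by rewrite /Q /P; field; lra.
    have HQT : Q <= 8 * T.
      rewrite HQP. apply: (Rmult_le_reg_r c) => //.
      have -> : 8 * P / c * c = 8 * P by field; lra.
      nra.
    have HAMO : A * M <= Rad ^ 2 / eps * Om.
      apply: Rmult_le_compat; lra.
    have -> : (160 * mu * Rad * c / delta + 9 * Rad ^ 2 / eps) * Om = 160 * T + 9 * (Rad ^ 2 / eps * Om).
      rewrite /T; field; lra.
    rewrite /X; lra.
  - set T := mu * Rad * c * Om / delta.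
    have HmRO : delta <= 8 * (mu * Rad * Om).
      have : 8 * mu * Rad * O8 <= 8 * mu * Rad * Om by apply: Rmult_le_compat_l; nra.
      lra.
    have HT8 : 8 <= T.
      rewrite /T. apply: (Rmult_le_reg_r delta) => //.
      have -> : mu * Rad * c * Om / delta * delta = c * (mu * Rad * Om) by field; lra.
      have : 64 * (mu * Rad * Om) <= c * (mu * Rad * Om) by apply: Rmult_le_compat_r; nra.
      lra.
    have HR2 : 0 <= Rad ^ 2 / eps * Om.
      apply: Rmult_le_pos; last lra. apply: Rmult_le_pos; first by simpl; nra.
      by apply: Rlt_le; apply: Rinv_0_lt_compat.
    have -> : (160 * mu * Rad * c / delta + 9 * Rad ^ 2 / eps) * Om = 160 * T + 9 * (Rad ^ 2 / eps * Om).
      rewrite /T; field; lra.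
    lra.
move=> g grad xs Hconv [Hgr _] Hmin Hxs0 H1 H2.
match goal with |- safe _ ?p _ _ => set post := p end.
set ok := prox_oracle_ok grad om alpha delta.
have Hpost : forall y lam, 0 < lam -> postP g grad om alpha c delta eps xs (xq x1 x2 A lam) y lam -> post y lam.
  by move=> y lam Hl Hp; split.
have Hq : forall w, 0 < w < 1 -> xq x1 x2 A (lamf A w) = xw x1 x2 w.
  by move=> w Hw; apply: xq_lamf.
have Hqd : forall w, 0 < w < 1 -> vnorm (vsub (xq x1 x2 A (lamf A w)) xs) <= mu * Rad.
  move=> w Hw. rewrite Hq //. apply: xw_dist => //; lra.
have Ha3 : alpha + 1 / c <= 1 / 3 by rewrite -/a'; lra.
have Hret1 : forall w y, 0 < w < 1 -> ok (xq x1 x2 A (lamf A w)) y ->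
    om (vnorm (vsub y (xq x1 x2 A (lamf A w)))) * vnorm (vsub y (xq x1 x2 A (lamf A w))) <= c * delta ->
    post y (lamf A w).
  move=> w y Hw Hok Hsm. apply: Hpost; first exact: lamf_pos. left.
  split => //.
  set x := xq x1 x2 A (lamf A w) in Hok Hsm *.
  set u := vsub y x in Hok Hsm *.
  set r := vnorm u in Hok Hsm *.
  set rho := om r in Hok Hsm *.
  have HD := Hqd w Hw. rewrite -/x in HD.
  have Hr0 : 0 <= r := vnorm_nonneg u.
  have Hrho : 0 <= rho by apply: hom_nonneg.
  have Hr8 : r <= 8 * c * (mu * Rad).
    apply: Rnot_lt_le => Hlt.
    have H8 : O8 <= rho by apply: hom_mono; nra.
    have : O8 * (8 * c * (mu * Rad)) < O8 * r by apply: Rmult_lt_compat_l.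
    have : O8 * r <= rho * r by apply: Rmult_le_compat_r.
    have : c * delta <= c * (8 * mu * Rad * O8) by apply: Rmult_le_compat_l; lra.
    lra.
  set v := vadd (grad y) (vscale rho u) in Hok.
  rewrite /ok /prox_oracle_ok -/u -/r -/rho -/v in Hok.
  have HG : grad y = vsub v (vscale rho u) by apply: vec_ext => i; rewrite /v /vsub /vadd /vscale; ring.
  have HGn : vnorm (grad y) <= ((1 + alpha) * c + 1) * delta.
    rewrite HG. apply: Rle_trans (vnorm_sub_le _ _) _.
    rewrite vnorm_scale Rabs_right; last lra. rewrite -/r.
    have : alpha * rho * r <= alpha * (c * delta).
      rewrite Rmult_assoc. apply: Rmult_le_compat_l; lra.
    lra.
  have F := first_order xs Hconv (Hgr y).
  have Hxy : vnorm (vsub xs y) <= mu * Rad + r.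
    have -> : vsub xs y = vadd (vsub xs x) (vscale (-1) u).
      apply: vec_ext => i; rewrite /u /vsub /vadd /vscale; ring.
    apply: Rle_trans (vnorm_triangle _ _) _.
    rewrite vnorm_scale Rabs_Ropp Rabs_R1 vnorm_sub_sym -/r. lra.
  have cs := cs_lower (grad y) (vsub xs y).
  have Gn := vnorm_nonneg (grad y).
  have Hz : vnorm (vsub xs y) <= 9 * c * (mu * Rad) by nra.
  have Hprod : vnorm (grad y) * vnorm (vsub xs y) <= ((1 + alpha) * c + 1) * delta * (9 * c * (mu * Rad)).
    apply: Rmult_le_compat => //. exact: vnorm_nonneg.
  have Hfin : ((1 + alpha) * c + 1) * delta * (9 * c * (mu * Rad)) <= eps.
    have Hpos : 0 < 9 * mu * Rad * c * ((1 + alpha) * c + 1).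
      apply: Rmult_lt_0_compat; last nra. apply: Rmult_lt_0_compat; last lra. nra.
    have := Rmult_le_compat_r (9 * mu * Rad * c * ((1 + alpha) * c + 1)) _ _ (Rlt_le _ _ Hpos) Hd1.
    have -> : eps / (9 * mu * Rad * c * ((1 + alpha) * c + 1)) * (9 * mu * Rad * c * ((1 + alpha) * c + 1)) = eps.
      rewrite /Rdiv Rmult_assoc Rinv_l; [ring | lra].
    move=> H. have -> : ((1 + alpha) * c + 1) * delta * (9 * c * (mu * Rad)) = delta * (9 * mu * Rad * c * ((1 + alpha) * c + 1)) by ring.
    done.
  lra.
have Hret2 : forall w y, 0 < w < 1 -> ok (xq x1 x2 A (lamf A w)) y ->
    ~ om (vnorm (vsub y (xq x1 x2 A (lamf A w)))) * vnorm (vsub y (xq x1 x2 A (lamf A w))) <= c * delta ->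
    1/2 <= lamf A w * om (vnorm (vsub y (xq x1 x2 A (lamf A w)))) <= 1 ->
    post y (lamf A w).
  move=> w y Hw Hok Hbig Hphi. apply: Hpost; first exact: lamf_pos. right.
  split => //. split; first lra. exact: Hok.
have Hwhi : whi = 1 - th by [].
have Hx12 : vnorm (vsub x1 x2) <= 2 * (mu * Rad).
  have -> : vsub x1 x2 = vsub (vsub x1 xs) (vsub x2 xs) by apply: vec_ext => i; rewrite /vsub; ring.
  apply: Rle_trans (vnorm_sub_le _ _) _. lra.
have Hnj : forall w1 w2 y1 y2, wlo <= w1 -> w1 < w2 -> w2 <= whi -> w2 - w1 <= Del ->
  ok (xq x1 x2 A (lamf A w1)) y1 ->
  c * delta < om (vnorm (vsub y1 (xq x1 x2 A (lamf A w1)))) * vnorm (vsub y1 (xq x1 x2 A (lamf A w1))) ->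
  lamf A w1 * om (vnorm (vsub y1 (xq x1 x2 A (lamf A w1)))) < 1/2 ->
  ok (xq x1 x2 A (lamf A w2)) y2 ->
  c * delta < om (vnorm (vsub y2 (xq x1 x2 A (lamf A w2)))) * vnorm (vsub y2 (xq x1 x2 A (lamf A w2))) ->
  1 < lamf A w2 * om (vnorm (vsub y2 (xq x1 x2 A (lamf A w2)))) -> False.
  move=> w1 w2 y1 y2 Hlo1 H12 Hhi2 Hd Hok1 Hb1 Hl1 Hok2 Hb2 Hl2.
  have Hw1 : 0 < w1 < 1 by lra.
  have Hw2 : 0 < w2 < 1 by lra.
  have [HV1 Hr1b] := ans_bound hom_nonneg Hconv Hgr Hmin (Hqd w1 Hw1) Hc0 hdelta0 (proj1 halpha) Ha3 Hok1 Hb1.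
  have [HV2 Hr2b] := ans_bound hom_nonneg Hconv Hgr Hmin (Hqd w2 Hw2) Hc0 hdelta0 (proj1 halpha) Ha3 Hok2 Hb2.
  have Hlr := lam_ratio A w1 w2 wlo th Del HA Hwlo Hlo1 H12 ltac:(lra) Hth Hd HDel1 HDel2.
  have Hl1p := lamf_pos HA Hw1. have Hl2p := lamf_pos HA Hw2.
  have HE : vnorm (vsub (xq x1 x2 A (lamf A w1)) (xq x1 x2 A (lamf A w2))) <= Del * (2 * (mu * Rad)).
    rewrite (Hq w1 Hw1) (Hq w2 Hw2) xw_diff Rabs_left; last lra.
    apply: Rmult_le_compat => //; try lra. exact: vnorm_nonneg.
  move: HV1 Hr1b Hl1 Hb1 HV2 Hr2b Hl2 Hb2 HE Hlr Hl1p Hl2p.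
  set p1 := xq x1 x2 A (lamf A w1). set p2 := xq x1 x2 A (lamf A w2).
  set l1 := lamf A w1. set l2 := lamf A w2.
  set r1 := vnorm (vsub y1 p1). set r2 := vnorm (vsub y2 p2).
  set rho1 := om r1. set rho2 := om r2.
  set E := vnorm (vsub p1 p2).
  rewrite -/a'.
  move=> HV1 Hr1b Hl1 Hb1 HV2 Hr2b Hl2 Hb2 HE Hlr Hl1p Hl2p.
  have Hr1n : 0 <= r1 := vnorm_nonneg _.
  have Hr2n : 0 <= r2 := vnorm_nonneg _.
  have Hrho1n : 0 <= rho1 by apply: hom_nonneg.
  have Hrho2n : 0 <= rho2 by apply: hom_nonneg.
  have Hcd : 0 < c * delta by nra.
  have Hrho1 : 0 < rho1.
    case: (Rle_lt_or_eq_dec _ _ Hrho1n) => // H0. rewrite -H0 in Hb1. lra.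
  have Hr1 : 0 < r1.
    case: (Rle_lt_or_eq_dec _ _ Hr1n) => // H0. rewrite -H0 in Hb1. lra.
  have Hrr : 8 * rho1 < 5 * rho2.
    have a1 : 8 * rho1 * l1 < 4 by lra.
    have a2 : 4 < 4 * (l2 * rho2) by lra.
    have a3 : 4 * (l2 * rho2) <= 5 * l1 * rho2.
      have := Rmult_le_compat_r rho2 _ _ Hrho2n Hlr. lra.
    have a4 : (8 * rho1) * l1 < (5 * rho2) * l1 by lra.
    exact: (Rmult_lt_reg_r l1).
  have H12r : r1 < r2.
    apply: Rnot_le_lt => H. have : rho2 <= rho1 by apply: hom_mono. lra.
  have Hgr0 : 0 < gam by lra.
  have Hgrow := om_growth hom_nonneg hom_mono hom_deriv Hom'b Hgr0 Hr1 H12r.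
  have Hkey := key_ineq y1 y2 p1 p2 Hconv Hgr Hrho1n Hrho2n.
  have HEn : 0 <= E := vnorm_nonneg _.
  have Hrho2M : rho2 <= M by apply: hom_mono; lra.
  have HEb : 80 * (gam * E) < r2.
    have b1 : E * M <= Del * (2 * (mu * Rad)) * M by apply: Rmult_le_compat_r; lra.
    have b2 : 80 * gam * (E * M) <= 64 * gam * delta.
      have : 80 * gam * (E * M) <= 80 * gam * (Del * (2 * (mu * Rad)) * M) by apply: Rmult_le_compat_l; lra.
      have : 80 * gam * (Del * (2 * (mu * Rad)) * M) = 32 * gam * (5 * (Del * (mu * Rad * M))) by ring.
      have : 32 * gam * (5 * (Del * (mu * Rad * M))) <= 32 * gam * (2 * delta) by apply: Rmult_le_compat_l; lra.
      lra.
    have b3 : 64 * gam * delta <= c * delta by apply: Rmult_le_compat_r; lra.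
    have b4 : rho2 * r2 <= M * r2 by apply: Rmult_le_compat_r.
    apply: (Rmult_lt_reg_r M) => //. lra.
  have HV1' := Rlt_le _ _ HV1. have HV2' := Rlt_le _ _ HV2.
  apply: (arith_contra rho1 rho2 r1 r2 _ _ E a' gam Hrho1 Hrr Hr1 H12r hgam Hgrow).
  - exact: Hkey.
  - exact: HV1'.
  - exact: HV2'.
  - exact: Ha'0.
  - exact: Ha'g.
  - exact: HEn.
  - exact: (Rlt_le _ _ HEb).
  - exact: vnorm_nonneg.
  - exact: vnorm_nonneg.
have Hbis : forall N' lo hi, wlo <= lo -> lo < hi -> hi <= whi -> hi - lo <= 2 ^ N' * Del ->
  (exists y, ok (xq x1 x2 A (lamf A lo)) y /\
     c * delta < om (vnorm (vsub y (xq x1 x2 A (lamf A lo)))) * vnorm (vsub y (xq x1 x2 A (lamf A lo))) /\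
     lamf A lo * om (vnorm (vsub y (xq x1 x2 A (lamf A lo)))) < 1/2) ->
  (exists y, ok (xq x1 x2 A (lamf A hi)) y /\
     c * delta < om (vnorm (vsub y (xq x1 x2 A (lamf A hi)))) * vnorm (vsub y (xq x1 x2 A (lamf A hi))) /\
     1 < lamf A hi * om (vnorm (vsub y (xq x1 x2 A (lamf A hi))))) ->
  safe ok post N' (bisect x1 x2 A om c delta N' lo hi).
  elim=> [|N' IH] lo hi Hlo Hlh Hhi Hw [y1 [Hok1 [Hb1 Hl1]]] [y2 [Hok2 [Hb2 Hl2]]].
    exfalso. apply: (Hnj lo hi y1 y2) => //. simpl in Hw. lra.
  move=> y Hy.
  have Hm1 : lo < (lo + hi) / 2 by lra.
  have Hm2 : (lo + hi) / 2 < hi by lra.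
  have Hm : 0 < (lo + hi) / 2 < 1 by lra.
  have Hw' : hi - lo <= 2 * (2 ^ N' * Del) by simpl in Hw; lra.
  apply: classify_safe.
  - exact: Hret1.
  - exact: Hret2.
  - move=> Hnb Hlow. apply: IH; try lra.
    + exists y; split => //; split => //; lra.
    + by exists y2.
  - move=> Hnb Hhigh. apply: IH; try lra.
    + by exists y1.
    + exists y; split => //; split => //; lra.
have Hwlo01 : 0 < wlo < 1 by lra.
have Hwhi01 : 0 < whi < 1 by lra.
have Hlo_imp : forall y, ok (xq x1 x2 A (lamf A wlo)) y ->
    c * delta < om (vnorm (vsub y (xq x1 x2 A (lamf A wlo)))) * vnorm (vsub y (xq x1 x2 A (lamf A wlo))) ->
    1 < lamf A wlo * om (vnorm (vsub y (xq x1 x2 A (lamf A wlo)))) -> False.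
  move=> y Hok Hb Hl.
  have [_ Hr] := ans_bound hom_nonneg Hconv Hgr Hmin (Hqd wlo Hwlo01) Hc0 hdelta0 (proj1 halpha) Ha3 Hok Hb.
  have Hrho : om (vnorm (vsub y (xq x1 x2 A (lamf A wlo)))) <= M.
    apply: hom_mono; [exact: vnorm_nonneg | lra].
  have Hlam : lamf A wlo * M = 1 / (4 * (4 * A * M - 1)).
    rewrite /lamf /wlo. field. split; [lra | split; [lra | nra]].
  have Hlam2 : lamf A wlo * M <= 1 / 4.
    rewrite Hlam. apply: (Rmult_le_reg_r (4 * (4 * A * M - 1))); first nra.
    have -> : 1 / (4 * (4 * A * M - 1)) * (4 * (4 * A * M - 1)) = 1 by field; nra.
    nra.
  have := Rmult_le_compat_l (lamf A wlo) _ _ (Rlt_le _ _ (lamf_pos HA Hwlo01)) Hrho.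
  lra.
have Hhi_imp : forall y, ok (xq x1 x2 A (lamf A whi)) y ->
    c * delta < om (vnorm (vsub y (xq x1 x2 A (lamf A whi)))) * vnorm (vsub y (xq x1 x2 A (lamf A whi))) ->
    lamf A whi * om (vnorm (vsub y (xq x1 x2 A (lamf A whi)))) < 1/2 -> False.
  move=> y Hok Hb Hl.
  have [_ Hr] := ans_bound hom_nonneg Hconv Hgr Hmin (Hqd whi Hwhi01) Hc0 hdelta0 (proj1 halpha) Ha3 Hok Hb.
  move: Hr Hb Hl.
  set r := vnorm (vsub y (xq x1 x2 A (lamf A whi))). set rho := om r.
  move=> Hr Hb Hl.
  have Hr0 : 0 <= r := vnorm_nonneg _.
  have Hrho0 : 0 <= rho by apply: hom_nonneg.
  have K1 : c * delta < rho * (2 * (mu * Rad)).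
    have : rho * r <= rho * (2 * (mu * Rad)) by apply: Rmult_le_compat_l; lra.
    lra.
  have Hlh : lamf A whi = A * whi ^ 2 * (4 + Q).
    rewrite /lamf Hwhi /th. field. lra.
  have K2 : 9 / 16 * (A * Q) <= lamf A whi.
    rewrite Hlh. have : 9 / 16 <= whi ^ 2 by simpl; nra.
    move=> H. have : 0 <= A * Q by nra. nra.
  have K3 : A * Q * (c * delta) = 8 * (mu * Rad) * (A * M) by rewrite /Q; field; lra.
  have K4 : 4 * (mu * Rad) <= A * Q * (c * delta) by rewrite K3; nra.
  (* lamf A whi * rho * (c delta) >= 9/16 * A Q * rho * c delta >= 9/16 * 4 mu Rad rho > 9/8 c delta *)
  have K5 : 9 / 16 * (A * Q) * rho <= lamf A whi * rho by apply: Rmult_le_compat_r.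
  have K6 : 9 / 16 * (4 * (mu * Rad)) * rho <= 9 / 16 * (A * Q * (c * delta)) * rho.
    apply: Rmult_le_compat_r => //. lra.
  have Hcd : 0 < c * delta by nra.
  have K7 : lamf A whi * rho * (c * delta) < 1 / 2 * (c * delta).
    apply: Rmult_lt_compat_r; lra.
  have K8 : 9 / 16 * (A * Q) * rho * (c * delta) <= lamf A whi * rho * (c * delta).
    apply: Rmult_le_compat_r; lra.
  have K9 : 9 / 16 * (A * Q) * rho * (c * delta) = 9 / 16 * (A * Q * (c * delta)) * rho by ring.
  lra.
have HN1' : 1 <= 2 ^ N * Del.
  rewrite /Del. apply: (Rmult_le_reg_r X) => //.
  have -> : 2 ^ N * (1 / X) * X = 2 ^ N by field; lra.
  lra.
move=> y Hy.
apply: classify_safe.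
- exact: Hret1.
- exact: Hret2.
- move=> Hnb Hlow y' Hy'.
  apply: classify_safe.
  + exact: Hret1.
  + exact: Hret2.
  + move=> Hnb' Hlow'. exfalso. apply: (Hhi_imp y') => //. lra.
  + move=> Hnb' Hhigh'. apply: Hbis; try lra.
    * exists y; split => //; split => //; lra.
    * exists y'; split => //; split => //; lra.
- move=> Hnb Hhigh. exfalso. apply: (Hlo_imp y) => //. lra.
Qed.
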